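(* Let $\phi\colon\mathbb{R}\to\mathbb{R}$ be an increasing homeomorphism with $\phi(0)=0$, let $f\colon\mathbb{R}\to\mathbb{R}$ be continuous and let $h\colon[0,T]\times\mathbb{R}\to\mathbb{R}$ be a Carathéodory function such that there exists $\gamma\in L^1([0,T],\mathbb{R}^+)$ with $h(t,u)\le\gamma(t)$ for a.e. $t\in[0,T]$ and all $u\in\mathbb{R}$. For $\lambda\in\,]0,1]$ consider $$(\phi(u'))'+\lambda f(u)u'+\lambda h(t,u)=0. \qquad (\ast_\lambda)$$ Then there exists a constant $K_0=K_0(\gamma)$ such that every $T$-periodic solution $u$ of $(\ast_\lambda)$ with $\lambda\in\,]0,1]$ satisfies $\max u-\min u\le K_0$ and $\|u'\|_{L^1}\le K_0$. Moreover, for any $\ell_1<\ell_2$ there exists $K_1>0$ such that every $T$-periodic solution $u$ of $(\ast_\lambda)$ with $\lambda\in\,]0,1]$ and $\ell_1\le u(t)\le\ell_2$ for all $t\in[0,T]$ satisfies $\|u'\|_\infty\le K_1$.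
   Context: A $T$-periodic solution is a $u\in\mathcal{C}^1([0,T])$ with $u(0)=u(T)$, $u'(0)=u'(T)$, $\phi(u')$ absolutely continuous, satisfying the equation a.e. A Carathéodory function is measurable in $t$, continuous in $u$, and for each $r>0$ bounded in absolute value on $[0,T]\times[-r,r]$ by an $L^1$ function of $t$. $\mathbb{R}^+$ denotes the nonnegative reals. *)

(* Defs.v *)
From HB Require Import structures.
From mathcomp Require Import all_boot all_order all_algebra.
From mathcomp Require Import all_classical all_reals all_analysis.
Set Implicit Arguments. Unset Strict Implicit. Unset Printing Implicit Defensive.
Import Order.TTheory GRing.Theory Num.Theory.
Import numFieldNormedType.Exports.
Local Open Scope classical_set_scope.
Local Open Scope ring_scope.

Definition incr_homeo_fix0 (R : realType) (phi : R -> R) : Prop :=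
  {homo phi : x y / x < y} /\ continuous phi /\
  (exists psi : R -> R, cancel phi psi /\ cancel psi phi /\ continuous psi) /\
  phi 0 = 0.

Definition abs_cont_on (R : realType) (x y : R) (F : R -> R) : Prop :=
  forall e : R, 0 < e -> exists2 d : R, 0 < d &
    forall (n : nat) (a b : 'I_n -> R),
      (forall i, x <= a i /\ a i <= b i /\ b i <= y) ->
      (forall i j : 'I_n, (i < j)%N -> b i <= a j) ->
      \sum_(i < n) (b i - a i) < d ->
      \sum_(i < n) `|F (b i) - F (a i)| < e.

Definition caratheodory (R : realType) (T : R) (h : R -> R -> R) : Prop :=
  (forall x : R, measurable_fun `[0%R, T]%classic (fun t => h t x)) /\
  (forall t : R, 0 <= t <= T -> continuous (h t)) /\
  (forall r : R, 0 < r -> exists g : R -> R,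
      (@lebesgue_measure R).-integrable `[0%R, T]%classic (EFin \o g) /\
      forall t x : R, 0 <= t <= T -> `|x| <= r -> `|h t x| <= g t).

Definition C1_on (R : realType) (T : R) (u du : R -> R) : Prop :=
  {within `[0%R, T]%classic, continuous u} /\
  {within `[0%R, T]%classic, continuous du} /\
  (forall t : R, 0 < t < T -> is_derive t 1 u (du t)) /\
  ((fun s : R => s^-1 * (u s - u 0)) @ 0^'+ --> du 0) /\
  ((fun s : R => s^-1 * (u (T + s) - u T)) @ 0^'- --> du T).

Definition periodic_solution (R : realType) (T : R) (phi f : R -> R)
    (h : R -> R -> R) (lam : R) (u du : R -> R) : Prop :=
  C1_on T u du /\ u 0 = u T /\ du 0 = du T /\
  abs_cont_on 0 T (phi \o du) /\
  {ae @lebesgue_measure R, forall t : R, 0 < t < T ->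
     derivable (phi \o du) t 1 /\
     derive1 (phi \o du) t + lam * f (u t) * du t + lam * h t (u t) = 0}.

(* Main.v *)
Require Import Defs.
From HB Require Import structures.
From mathcomp Require Import all_boot all_order all_algebra.
From mathcomp Require Import all_classical all_reals all_analysis.
From mathcomp Require Import ring lra.
Set Implicit Arguments. Unset Strict Implicit. Unset Printing Implicit Defensive.
Import Order.TTheory GRing.Theory Num.Theory.
Import numFieldNormedType.Exports.
Local Open Scope classical_set_scope.
Local Open Scope ring_scope.


Lemma near_dnbhs0 (R : realType) (P : R -> Prop) :
  (\forall h \near 0^', P h) -> exists2 e : R, 0 < e & forall h, h != 0 -> `|h| < e -> P h.
Proof.
move=> /nbhs_ballP[e e0 He]; exists e => // h h0 he; apply: He => //.
by rewrite /ball /= sub0r normrN.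
Qed.

Lemma near_left0 (R : realType) (P : R -> Prop) :
  (\forall h \near 0^'-, P h) -> exists2 e : R, 0 < e & forall h, -e < h < 0 -> P h.
Proof.
move=> /nbhs_ballP[e e0 He]; exists e => // h /andP[h1 h2]; apply: He => //.
by rewrite /ball /= sub0r normrN ltr0_norm // ltrNl.
Qed.

Lemma near_right0 (R : realType) (P : R -> Prop) :
  (\forall h \near 0^'+, P h) -> exists2 e : R, 0 < e & forall h, 0 < h < e -> P h.
Proof.
move=> /nbhs_ballP[e e0 He]; exists e => // h /andP[h1 h2]; apply: He => //.
by rewrite /ball /= sub0r normrN gtr0_norm.
Qed.

Lemma is_derive_quot (R : realType) (u : R -> R) (t d : R) :
  is_derive t (1:R) u d -> forall e : R, 0 < e -> exists2 k : R, 0 < k &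
  forall h, h != 0 -> `|h| < k -> `|h^-1 * (u (t + h) - u t) - d| < e.
Proof.
move=> [der val] e e0.
have hc : (fun h : R => h^-1 *: ((u \o shift t) (h *: 1) - u t)) @ 0^' --> d.
  by rewrite -val; exact: der.
move/cvgrPdist_lt : hc => /(_ e e0) /near_dnbhs0[k k0 Hk].
exists k => // h h0 hk; have := Hk h h0 hk.
by rewrite -normrN opprB -[h%:A]/(h * 1) mulr1 /= /shift (addrC h t).
Qed.

Lemma min_facts (R : realType) (a b : R) : 0 < a -> 0 < b ->
  0 < Num.min a b /\ Num.min a b <= a /\ Num.min a b <= b.
Proof.
move=> ha hb; split; first by rewrite lt_min ha hb.
by split; rewrite ge_min lexx ?orbT.
Qed.

Lemma within_eps (R : realType) (a b : R) (u : R -> R) t :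
  {within `[a, b]%classic, continuous u} -> a <= t <= b ->
  forall e : R, 0 < e -> exists2 k : R, 0 < k &
    forall z, a <= z <= b -> `|z - t| < k -> `|u z - u t| < e.
Proof.
move=> cu ht e e0.
have At : `[a, b]%classic t by rewrite /= in_itv /=.
move/subspace_continuousP : cu => /(_ t At) /cvgrPdist_lt /(_ e e0).
rewrite near_withinE => /nbhs_ballP[k k0 Hk].
exists k => // z hz hzt; have := Hk z; rewrite /ball /= -normrN opprB => /(_ hzt).
by rewrite -normrN opprB; apply; rewrite /= in_itv /=.
Qed.

Definition rquot (R : realType) (T : R) (u du : R -> R) :=
  forall t, 0 <= t < T -> forall e : R, 0 < e -> exists2 k : R, 0 < k &
    forall h, 0 < h < k -> `|h^-1 * (u (t + h) - u t) - du t| < e.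
Definition lquot (R : realType) (T : R) (u du : R -> R) :=
  forall t, 0 < t <= T -> forall e : R, 0 < e -> exists2 k : R, 0 < k &
    forall h, - k < h < 0 -> `|h^-1 * (u (t + h) - u t) - du t| < e.

Lemma C1_rquot (R : realType) (T : R) u du : C1_on T u du -> rquot T u du.
Proof.
move=> [_ [_ [hd [h0 _]]]] t /andP[t0 tT] e e0.
have [<-|tpos] := eqVneq 0 t.
  move/cvgrPdist_lt : h0 => /(_ e e0) /near_right0[k k0 Hk].
  exists k => // h hh; have := Hk h hh.
  by rewrite -normrN opprB add0r.
have tp : 0 < t by rewrite lt_def eq_sym tpos t0.
have [k k0 Hk] := is_derive_quot (hd t (ltac:(by rewrite tp tT))) e0.
exists k => // h /andP[h1 h2]; apply: Hk; first by rewrite gt_eqF.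
by rewrite gtr0_norm.
Qed.

Lemma C1_lquot (R : realType) (T : R) u du : C1_on T u du -> lquot T u du.
Proof.
move=> [_ [_ [hd [_ h1]]]] t /andP[t0 tT] e e0.
have [->|tpos] := eqVneq t T.
  move/cvgrPdist_lt : h1 => /(_ e e0) /near_left0[k k0 Hk].
  exists k => // h hh; have := Hk h hh.
  by rewrite -normrN opprB.
have tp : t < T by rewrite lt_neqAle tpos tT.
have [k k0 Hk] := is_derive_quot (hd t (ltac:(by rewrite tp t0))) e0.
exists k => // h /andP[hh1 hh2]; apply: Hk; first by rewrite lt_eqF.
by rewrite ltr0_norm // ltrNl.
Qed.

Lemma first_hit (R : realType) (T : R) u du (x p q : R) :
  {within `[0, T]%classic, continuous u} -> lquot T u du ->
  0 <= p -> p < q -> q <= T -> x < u p -> u q <= x ->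
  exists s, [/\ p < s <= q, u s = x & du s <= 0].
Proof.
move=> cu lq p0 pq qT xp qx.
pose S := [set z | p <= z <= q /\ u z <= x].
have Sq : S q by split => //; rewrite (ltW pq) lexx.
have S0 : S !=set0 by exists q.
have lbS : lbound S p by move=> z [/andP[]].
have hiS : has_inf S by split => //; exists p.
set s := inf S.
have ps : p <= s by apply: lb_le_inf.
have sq : s <= q by apply: (ge_inf hiS.2).
have s0T : 0 <= s <= T by apply/andP; split; lra.
have below : forall k : R, 0 < k -> p < s -> exists z, [/\ p <= z, z < s, s - k < z & ~ S z].
  move=> k k0 ps'.
  have [m0 [m1 m2]] := min_facts k0 (ltac:(lra) : 0 < s - p).
  exists (s - Num.min k (s - p) / 2); split; try lra.
  move=> Sz; have := ge_inf hiS.2 Sz; lra.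
have us_le : u s <= x.
  rewrite leNgt; apply/negP => xs.
  have [k k0 Hk] := within_eps cu s0T (ltac:(lra) : 0 < u s - x).
  have [z Sz zs] := inf_adherent k0 hiS.
  have sz : s <= z by apply: (ge_inf hiS.2).
  case: Sz => /andP[pz zq] uz.
  have := Hk z (ltac:(apply/andP; split; lra)) (ltac:(rewrite ger0_norm; lra)).
  rewrite ltr_norml => /andP[H1 H2]; lra.
have ps' : p < s.
  rewrite lt_def ps andbT; apply/eqP => sp.
  by move: us_le; rewrite sp; lra.
have us_ge : x <= u s.
  rewrite leNgt; apply/negP => xs.
  have [k k0 Hk] := within_eps cu s0T (ltac:(lra) : 0 < x - u s).
  have [z [pz zs sz nSz]] := below k k0 ps'.
  apply: nSz; split; first by apply/andP; split; lra.
  have := Hk z (ltac:(apply/andP; split; lra)) (ltac:(rewrite ltr0_norm; lra)).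
  rewrite ltr_norml; lra.
exists s; split => //; first by rewrite ps' sq.
  by apply/eqP; rewrite eq_le us_le us_ge.
rewrite leNgt; apply/negP => dpos.
have [k k0 Hk] := lq s (ltac:(apply/andP; split; lra)) _ dpos.
have [z [pz zs sz nSz]] := below k k0 ps'.
apply: nSz; split; first by apply/andP; split; lra.
have := Hk (z - s) (ltac:(apply/andP; split; lra)).
rewrite addrCA subrr addr0 ltr_norml => /andP[H1 _].
have hq : 0 < (z - s)^-1 * (u z - u s) by lra.
have zs0 : z - s < 0 by lra.
have e : u z - u s = (z - s) * ((z - s)^-1 * (u z - u s)).
  by rewrite mulrA divff ?mul1r // lt_eqF.
have : u z - u s < 0 by rewrite e nmulr_rlt0.
lra.
Qed.


Lemma cross_pos_lt (R : realType) (T : R) u du :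
  0 < T -> {within `[0, T]%classic, continuous u} -> rquot T u du -> lquot T u du ->
  u 0 = u T -> forall t, 0 <= t < T -> 0 < du t ->
  exists s, [/\ 0 <= s <= T, u s = u t & du s <= 0].
Proof.
move=> T0 cu rq lq uT t /andP[t0 tT] dpos.
have [k k0 Hk] := rq t (ltac:(by rewrite t0 tT)) _ dpos.
have [h [h0 hk hT]] : exists h, [/\ 0 < h, h < k & t + h <= T].
  have [m0 [m1 m2]] := min_facts k0 (ltac:(lra) : 0 < T - t).
  exists (Num.min k (T - t) / 2); split; lra.
have := Hk h (ltac:(by rewrite h0 hk)).
rewrite ltr_norml => /andP[H1 _].
have hq : 0 < h^-1 * (u (t + h) - u t) by lra.
have up : u t < u (t + h).
  have : 0 < u (t + h) - u t by move: hq; rewrite pmulr_rgt0 // invr_gt0.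
  lra.
have tp : t < t + h by lra.
move: (t + h) up hT tp => p up pT tp {Hk H1 hq}.
have [[q [/andP[pq qT] uq]]|nq] := pselect (exists q, p <= q <= T /\ u q <= u t).
  have pq' : p < q.
    rewrite lt_neqAle pq andbT; apply/eqP => pq''; move: uq; rewrite -pq''; lra.
  have [s [/andP[ps sq] us ds]] := first_hit cu lq (ltac:(lra) : 0 <= p) pq' qT up uq.
  by exists s; split => //; apply/andP; split; lra.
have uTt : u t < u 0.
  rewrite uT ltNge; apply/negP => uTle; apply: nq; exists T; split => //.
  by rewrite pT lexx.
have t0' : 0 < t.
  rewrite lt_neqAle t0 andbT; apply/eqP => t0e; move: uTt; rewrite -t0e; lra.
have [s [/andP[ps sq] us ds]] := first_hit cu lq (lexx 0) t0' (ltW tT) uTt (lexx _).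
by exists s; split => //; apply/andP; split; lra.
Qed.

Lemma cross_pos (R : realType) (T : R) u du :
  0 < T -> {within `[0, T]%classic, continuous u} -> rquot T u du -> lquot T u du ->
  u 0 = u T -> du 0 = du T -> forall t, 0 <= t <= T -> 0 < du t ->
  exists s, [/\ 0 <= s <= T, u s = u t & du s <= 0].
Proof.
move=> T0 cu rq lq uT dT t /andP[t0 tT] dpos.
have [tT'|tTe] := ltP t T.
  by apply: cross_pos_lt => //; rewrite t0.
have -> : t = T by apply/eqP; rewrite eq_le tT tTe.
rewrite -uT; apply: cross_pos_lt => //; first by rewrite lexx T0.
by rewrite dT -(_ : t = T) //; apply/eqP; rewrite eq_le tT tTe.
Qed.

Lemma cross_neg (R : realType) (T : R) u du :
  0 < T -> {within `[0, T]%classic, continuous u} -> rquot T u du -> lquot T u du ->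
  u 0 = u T -> du 0 = du T -> forall t, 0 <= t <= T -> du t < 0 ->
  exists s, [/\ 0 <= s <= T, u s = u t & 0 <= du s].
Proof.
move=> T0 cu rq lq uT dT t tT dneg.
have cu' : {within `[0, T]%classic, continuous (fun x => - u x)}.
  by move=> x; apply: continuousN; exact: cu.
have rq' : rquot T (fun x => - u x) (fun x => - du x).
  move=> s hs e e0; have [k k0 Hk] := rq s hs e e0; exists k => // h hh.
  rewrite (_ : h^-1 * (- u (s + h) - - u s) - - du s =
     - (h^-1 * (u (s + h) - u s) - du s)); last by ring.
  by rewrite normrN; apply: Hk.
have lq' : lquot T (fun x => - u x) (fun x => - du x).
  move=> s hs e e0; have [k k0 Hk] := lq s hs e e0; exists k => // h hh.
  rewrite (_ : h^-1 * (- u (s + h) - - u s) - - du s =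
     - (h^-1 * (u (s + h) - u s) - du s)); last by ring.
  by rewrite normrN; apply: Hk.
have [s [hs us ds]] := cross_pos T0 cu' rq' lq' (ltac:(by rewrite /= uT))
  (ltac:(by rewrite /= dT)) tT (ltac:(by rewrite /= oppr_gt0)).
exists s; split => //; last by rewrite -oppr_le0.
by apply: oppr_inj.
Qed.


Definition fam_ok (R : realType) (a x : R) (U : set R) (sq : seq (R * R)) :=
  [/\ (forall i, (i < size sq)%N -> a <= (nth (0,0) sq i).1 /\
         (nth (0,0) sq i).1 <= (nth (0,0) sq i).2 /\ (nth (0,0) sq i).2 <= x),
      (forall i j, (i < j)%N -> (j < size sq)%N ->
         (nth (0,0) sq i).2 <= (nth (0,0) sq j).1) &
      ((\sum_(p <- sq) (p.2 - p.1))%:E <= lebesgue_measure (U `&` `]a, x]))%E].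

Lemma mu_oc (R : realType) (x y : R) : x <= y ->
  lebesgue_measure (`]x, y] : set R) = (y - x)%:E.
Proof.
move=> xy; rewrite lebesgue_measure_itv /= lte_fin.
have [xy'|] := ltP x y; first by rewrite EFinB.
move=> yx; have -> : y = x by apply/eqP; rewrite eq_le xy yx.
by rewrite subrr.
Qed.

Lemma mu_split (R : realType) (U : set R) (a x y : R) : measurable U ->
  a <= x -> x <= y ->
  lebesgue_measure (U `&` `]a, y]) =
  (lebesgue_measure (U `&` `]a, x]) + lebesgue_measure (U `&` `]x, y]))%E.
Proof.
move=> mU ax xy.
have -> : U `&` `]a, y] = (U `&` `]a, x]) `|` (U `&` `]x, y]).
  apply/seteqP; split => z /=; rewrite !in_itv /=.
    move=> [Uz /andP[az zy]]; have [zx|xz] := leP z x.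
      by left; split => //; rewrite az.
    by right; split => //; rewrite zy.
  by move=> [[Uz /andP[az zx]]|[Uz /andP[xz zy]]]; split => //; apply/andP; split; lra.
rewrite measureU //.
- by apply: measurableI => //; exact: measurable_itv.
- by apply: measurableI => //; exact: measurable_itv.
apply/seteqP; split => z //= [[_ /andP[_ zx]] [_ /andP[xz _]]]; move: zx xz; rewrite !bnd_simp; lra.
Qed.

Lemma fam_nil (R : realType) (a : R) (U : set R) : fam_ok a a U [::].
Proof.
split; [by move=> i|by move=> i j _|].
by rewrite big_nil; apply: measure_ge0.
Qed.

Lemma fam_weaken (R : realType) (a x y : R) (U : set R) sq : measurable U ->
  x <= y -> fam_ok a x U sq -> fam_ok a y U sq.
Proof.
move=> mU xy [h1 h2 h3]; split => //.
  by move=> i /h1 [? [? ?]]; split => //; split => //; lra.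
apply: (le_trans h3); apply: le_measure; rewrite ?inE.
- by apply: measurableI => //; exact: measurable_itv.
- by apply: measurableI => //; exact: measurable_itv.
by move=> z /= [Uz]; rewrite !in_itv /= => /andP[az zx]; split => //; apply/andP; split; lra.
Qed.

Lemma fam_rcons (R : realType) (a x y : R) (U : set R) sq : measurable U ->
  a <= x -> x <= y -> `]x, y] `<=` U -> fam_ok a x U sq ->
  fam_ok a y U (rcons sq (x, y)).
Proof.
move=> mU ax xy xyU [h1 h2 h3]; split.
- move=> i; rewrite size_rcons ltnS leq_eqVlt => /orP[/eqP ->|isq].
    by rewrite nth_rcons ltnn eqxx /=; split => //; split => //.
  rewrite nth_rcons isq; have [? [? ?]] := h1 i isq; split => //; split => //; lra.
- move=> i j ij; rewrite size_rcons ltnS leq_eqVlt => /orP[/eqP jE|jsq].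
    have isq : (i < size sq)%N by rewrite -jE.
    rewrite jE (nth_rcons _ _ _ (size sq)) ltnn eqxx /= nth_rcons isq.
    by have [_ [_ ?]] := h1 i isq.
  have isq : (i < size sq)%N by apply: ltn_trans ij jsq.
  by rewrite !nth_rcons isq jsq; apply: h2.
- rewrite big_rcons /= EFinD (mu_split mU ax xy) (setIidr xyU) (mu_oc xy).
  exact: leeD h3 (lexx _).
Qed.

Lemma creep (R : realType) (a b e M : R) (H G : R -> R) (U : set R) :
  a <= b -> 0 < e -> 0 <= M -> measurable U ->
  (forall s, a <= s <= b -> U s ->
     exists2 k : R, 0 < k & forall z, `|z - s| < k -> U z) ->
  (forall s, a <= s <= b -> ~ U s -> exists2 k : R, 0 < k &
     forall x y, s - k < x -> x <= s -> s <= y -> y < s + k ->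
       - e * (y - x) <= H y - H x) ->
  (forall x y, a <= x -> x <= y -> y <= b ->
     - `|G y - G x| - M * (y - x) <= H y - H x) ->
  exists sq, fam_ok a b U sq /\
    - e * (b - a) - \sum_(p <- sq) (`|G p.2 - G p.1| + M * (p.2 - p.1))
      <= H b - H a.
Proof.
move=> ab e0 M0 mU hU hN hG.
pose P x := exists sq, fam_ok a x U sq /\
    - e * (x - a) - \sum_(p <- sq) (`|G p.2 - G p.1| + M * (p.2 - p.1))
      <= H x - H a.
pose S := [set x | (a <= x <= b) /\ P x].
have Sa : S a.
  split; first by rewrite lexx ab.
  exists [::]; split; first exact: fam_nil.
  by rewrite big_nil !subrr mulr0; lra.
have hsup : has_sup S.
  by split; [exists a | exists b => z [/andP[_ zb] _]].
have as_ : a <= sup S by apply: sup_upper_bound hsup _ Sa.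
have sb : sup S <= b.
  by apply: ge_sup; [exists a | move=> z [/andP[_ zb] _]].
move: (sup S) as_ sb (sup_upper_bound hsup) (@sup_adherent _ S) => s as_ sb sup_ub sup_ad.
have step : exists2 k : R, 0 < k & forall x y, s - k < x -> x <= s -> s <= y ->
    y < s + k -> y <= b -> a <= x -> P x -> P y.
  have [Us|nUs] := pselect (U s).
    have [k k0 Hk] := hU s (ltac:(by rewrite as_ sb)) Us.
    exists k => // x y h1 h2 h3 h4 h5 h6 [sq [fsq Hsq]].
    exists (rcons sq (x, y)); split.
      apply: fam_rcons => //; first lra.
      move=> z /=; rewrite in_itv /= => /andP[xz zy]; apply: Hk.
      rewrite ltr_norml; apply/andP; split; lra.
    rewrite big_rcons /=.
    have := hG x y h6 (ltac:(lra)) h5.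
    have : 0 <= e * (y - x) by apply: mulr_ge0; lra.
    lra.
  have [k k0 Hk] := hN s (ltac:(by rewrite as_ sb)) nUs.
  exists k => // x y h1 h2 h3 h4 h5 h6 [sq [fsq Hsq]].
  exists sq; split; first by apply: fam_weaken fsq => //; lra.
  have := Hk x y h1 h2 h3 h4.
  lra.
have [k k0 st] := step.
have [x [/andP[ax xb] Px] xs] := sup_ad k k0 hsup.
have xles : x <= s by apply: sup_ub; split => //; rewrite ax xb.
have sEb : s = b.
  apply/eqP; rewrite eq_le sb /= leNgt; apply/negP => sb'.
  have [y [sy yk yb]] : exists y, [/\ s < y, y < s + k & y <= b].
    have [hb|hb] := leP b (s + k / 2).
      by exists b; split => //; lra.
    by exists (s + k / 2); split => //; lra.
  have Py := st x y (ltac:(lra)) xles (ltac:(lra)) yk yb ax Px.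
  have : y <= s by apply: sup_ub; split => //; apply/andP; split; lra.
  lra.
apply: (st x b) => //; lra.
Qed.


Definition fam_ok' (R : realType) (a x : R) (sq : seq (R * R)) :=
  (forall i, (i < size sq)%N -> a <= (nth (0,0) sq i).1 /\
         (nth (0,0) sq i).1 <= (nth (0,0) sq i).2 /\ (nth (0,0) sq i).2 <= x) /\
  (forall i j, (i < j)%N -> (j < size sq)%N ->
         (nth (0,0) sq i).2 <= (nth (0,0) sq j).1).

Lemma sum_seq_ord (R : realType) (sq : seq (R * R)) (g : R * R -> R) :
  \sum_(p <- sq) g p = \sum_(i < size sq) g (nth (0,0) sq i).
Proof. by rewrite (big_nth (0,0)) big_mkord. Qed.

Lemma ac_seq (R : realType) (x y : R) (F : R -> R) : abs_cont_on x y F ->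
  forall e : R, 0 < e -> exists2 d : R, 0 < d & forall sq, fam_ok' x y sq ->
    \sum_(p <- sq) (p.2 - p.1) < d -> \sum_(p <- sq) `|F p.2 - F p.1| < e.
Proof.
move=> hac e e0; have [d d0 Hd] := hac e e0; exists d => // sq [h1 h2] hs.
rewrite sum_seq_ord.
apply: (Hd (size sq) (fun i => (nth (0,0) sq i).1) (fun i => (nth (0,0) sq i).2)).
- move=> i; have [? [? ?]] := h1 i (ltn_ord i); split => //.
- by move=> i j ij; apply: h2 => //; exact: ltn_ord.
- by move: hs; rewrite sum_seq_ord.
Qed.

Lemma mono (R : realType) (a b M : R) (H G : R -> R) (N : set R) :
  a <= b -> 0 <= M -> (@lebesgue_measure R).-negligible N ->
  (forall s, a <= s <= b -> ~ N s -> forall e : R, 0 < e -> exists2 k : R, 0 < k &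
     forall x y, s - k < x -> x <= s -> s <= y -> y < s + k ->
       - e * (y - x) <= H y - H x) ->
  (forall x y, a <= x -> x <= y -> y <= b ->
     - `|G y - G x| - M * (y - x) <= H y - H x) ->
  (forall e : R, 0 < e -> exists2 d : R, 0 < d & forall sq, fam_ok' a b sq ->
    \sum_(p <- sq) (p.2 - p.1) < d -> \sum_(p <- sq) `|G p.2 - G p.1| < e) ->
  H a <= H b.
Proof.
move=> ab M0 [A [mA muA NA]] hN hG hAC.
rewrite leNgt; apply/negP => Hlt.
have ba3 : 0 < b - a + 3 by lra.
pose e := (H a - H b) / (b - a + 3).
have e0 : 0 < e by apply: divr_gt0; lra.
have eE : e * (b - a + 3) = H a - H b by rewrite /e divfK // gt_eqF.
have [d1 d10 AC] := hAC e e0.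
have M1 : 0 < M + 1 by lra.
have [m0 [m1 m2]] := min_facts d10 (divr_gt0 e0 M1).
move: (Num.min d1 (e / (M + 1))) m0 m1 m2 => dl m0 m1 m2.
have muAf : (lebesgue_measure A < +oo)%E by rewrite muA ltry.
have [U [oU AU muUA]] := lebesgue_regularity_outer mA muAf m0.
have mU : measurable U by apply: measurable_realfun.open_measurable.
have muU : (lebesgue_measure U < dl%:E)%E.
  rewrite (measureDI (@lebesgue_measure R) mU mA).
  have hUA : (lebesgue_measure (U `&` A) <= 0)%E.
    rewrite -muA; apply: le_measure; rewrite ?inE //.
    exact: measurableI.
  apply: (@le_lt_trans _ _ (lebesgue_measure (U `\` A) + 0)%E); last by rewrite adde0.
  exact: leeD.
have hU : forall s, a <= s <= b -> U s ->
    exists2 k : R, 0 < k & forall z, `|z - s| < k -> U z.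
  move=> s _ Us; move/(_ s Us): oU => /nbhs_ballP[k k0 Hk].
  exists k => // z hz; apply: Hk; rewrite /ball /= -normrN opprB //.
have hN' : forall s, a <= s <= b -> ~ U s -> exists2 k : R, 0 < k &
     forall x y, s - k < x -> x <= s -> s <= y -> y < s + k ->
       - e * (y - x) <= H y - H x.
  move=> s hs nUs; apply: hN => // Ns; apply: nUs; apply: AU; exact: NA.
have [sq [[f1 f2 f3] Hsq]] := creep ab e0 M0 mU hU hN' hG.
have slen : \sum_(p <- sq) (p.2 - p.1) < dl.
  rewrite -lte_fin; apply: (le_lt_trans f3); apply: le_lt_trans muU.
  apply: le_measure; rewrite ?inE //.
  by apply: measurableI => //; exact: measurable_itv.
have sG := AC sq (conj f1 f2) (lt_le_trans slen m1).
have sM : M * \sum_(p <- sq) (p.2 - p.1) <= e.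
  apply: (le_trans (ler_wpM2l M0 (ltW (lt_le_trans slen m2)))).
  rewrite mulrA ler_pdivrMr //; lra.
move: Hsq; rewrite big_split /= -mulr_sumr.
have : 0 < e * (b - a + 3) by apply: mulr_gt0.
lra.
Qed.


Lemma deriv_bound (R : realType) (H : R -> R) (s d : R) :
  is_derive s (1:R) H d -> 0 <= d -> forall e : R, 0 < e -> exists2 k : R, 0 < k &
  forall x y, s - k < x -> x <= s -> s <= y -> y < s + k -> - e * (y - x) <= H y - H x.
Proof.
move=> hd d0 e e0.
have [k k0 Hk] := is_derive_quot hd e0.
exists k => // x y h1 h2 h3 h4.
have right : - e * (y - s) <= H y - H s.
  have [ys|ys] := eqVneq y s; first by rewrite ys !subrr mulr0.
  have hy : 0 < y - s by rewrite lt_neqAle eq_sym subr_eq0 ys subr_ge0 h3.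
  have := Hk (y - s) (ltac:(by rewrite gt_eqF)) (ltac:(rewrite gtr0_norm //; lra)).
  rewrite addrCA subrr addr0 ltr_norml => /andP[H1 _].
  set q := (y - s)^-1 * (H y - H s) in H1.
  have -> : H y - H s = (y - s) * q by rewrite /q mulrA divff ?mul1r // gt_eqF.
  nra.
have left : - e * (s - x) <= H s - H x.
  have [xs|xs] := eqVneq x s; first by rewrite xs !subrr mulr0.
  have hx : x - s < 0 by rewrite subr_lt0 lt_neqAle xs h2.
  have := Hk (x - s) (ltac:(by rewrite lt_eqF)) (ltac:(rewrite ltr0_norm //; lra)).
  rewrite addrCA subrr addr0 ltr_norml => /andP[H1 _].
  set q := (x - s)^-1 * (H x - H s) in H1.
  have -> : H s - H x = - ((x - s) * q) by rewrite /q mulrA divff ?mul1r ?opprB // lt_eqF.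
  nra.
lra.
Qed.

Lemma is_derive_ext (R : realType) (f g : R -> R) (x d : R) :
  (forall y, f y = g y) -> is_derive x (1:R) f d -> is_derive x (1:R) g d.
Proof. by move=> fg; have -> : f = g by apply: funext. Qed.

Lemma negligible_pt (R : realType) (x : R) : (@lebesgue_measure R).-negligible [set x].
Proof.
exists `[x, x]%classic; split.
- exact: measurable_itv.
- by rewrite lebesgue_measure_itv /= lte_fin ltxx.
- by move=> z /= ->; rewrite in_itv /= lexx.
Qed.

Lemma within_cvg (R : realType) (A : set R) (g : R -> R) x :
  {within A, continuous g} -> A x -> g @ within A (nbhs x) --> g x.
Proof. by move/subspace_continuousP; apply. Qed.

Lemma lipschitz_mvt (R : realType) (T L : R) (g dg : R -> R) :
  (forall t, 0 < t < T -> is_derive t (1:R) g (dg t)) ->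
  {within `[0, T]%classic, continuous g} ->
  (forall t, 0 <= t <= T -> `|dg t| <= L) ->
  forall x y, 0 <= x -> x <= y -> y <= T -> `|g y - g x| <= L * (y - x).
Proof.
move=> hd cg hL x y x0 xy yT.
have sub : `[x, y]%classic `<=` `[0, T]%classic.
  move=> z; rewrite /= !in_itv /= => /andP[? ?]; apply/andP; split; lra.
have hd' : forall z, z \in `]x, y[ -> is_derive z (1:R) g (dg z).
  move=> z; rewrite in_itv /= => /andP[? ?]; apply: hd; apply/andP; split; lra.
have [c c_in ->] := MVT_segment xy hd' (continuous_subspaceW sub cg).
rewrite normrM (ger0_norm (ltac:(lra) : 0 <= y - x)).
apply: ler_wpM2r; first lra.
by apply: hL; move: c_in; rewrite in_itv /= => /andP[? ?]; apply/andP; split; lra.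
Qed.


Lemma fam_ok'_weaken (R : realType) (a b c d : R) sq :
  c <= a -> b <= d -> fam_ok' a b sq -> fam_ok' c d sq.
Proof.
move=> ca bd [h1 h2]; split => // i /h1 [? [? ?]]; split; first lra.
split => //; lra.
Qed.

Lemma antider (R : realType) (f : R -> R) (a0 : R) : continuous f ->
  let Fa x := (\int[@lebesgue_measure R]_(z in [set` `[a0, x]]) (f z))%R in
  forall x, a0 < x -> is_derive x (1:R) Fa (f x).
Proof.
move=> cf Fa x ax.
have xu : x < x + 1 by rewrite ltrDl.
have intf : (@lebesgue_measure R).-integrable `[a0, x + 1] (EFin \o f).
  apply: continuous_compact_integrable; first exact: segment_compact.
  exact: continuous_subspaceT.
have [der val] := continuous_FTC1_closed xu intf ax (cf x).
by rewrite -val derive1E; apply: derivableP.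
Qed.


Lemma core (R : realType) (T : R) (phi f gamma : R -> R) (h : R -> R -> R)
    (lam : R) (u du Gi : R -> R) :
  0 < T -> {homo phi : x y / x < y} -> phi 0 = 0 -> continuous f -> 0 < lam <= 1 ->
  (forall x, 0 <= Gi x) -> (forall x y, x <= y -> Gi x <= Gi y) ->
  {ae @lebesgue_measure R, forall t, 0 < t < T -> is_derive t (1:R) Gi (gamma t)} ->
  {ae @lebesgue_measure R, forall t : R, 0 <= t <= T ->
          forall x : R, h t x <= gamma t} ->
  (forall t, 0 <= t <= T -> 0 <= gamma t) ->
  periodic_solution T phi f h lam u du ->
  forall t, 0 <= t <= T -> - Gi T <= phi (du t) <= Gi T.
Proof.
move=> T0 phiI phi0 cf /andP[lam0 lam1] Gi0 Gimono hGi hgam g0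
  [C1 [uT [duT [hac hae]]]].
have [cu [cdu [hd [hr hl]]]] := C1.
have [m m_in um] := EVT_min (ltW T0) cu.
pose a0 := u m - 1.
have ua0 : forall t, 0 <= t <= T -> a0 < u t.
  move=> t tin; have := um t (ltac:(by rewrite in_itv /=)); rewrite /a0; lra.
pose Fa x := (\int[@lebesgue_measure R]_(z in [set` `[a0, x]]) (f z))%R.
have dFa : forall x, a0 < x -> is_derive x (1:R) Fa (f x) := @antider R f a0 cf.
have cFa : forall x, a0 < x -> {for x, continuous Fa}.
  move=> x ax; apply: differentiable_continuous; apply/derivable1_diffP.
  by have [] := dFa x ax.
pose g := Fa \o u.
pose dg t := f (u t) * du t.
have hdg : forall t, 0 < t < T -> is_derive t (1:R) g (dg t).
  move=> t /andP[t0 tT]; apply: is_derive1_comp; last by apply: hd; rewrite t0 tT.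
  by apply: dFa; apply: ua0; rewrite !ltW.
have cg : {within `[0, T]%classic, continuous g}.
  apply: within_continuous_comp => // y; rewrite inE => -[t tin <-].
  by apply: cFa; apply: ua0; move: tin; rewrite /= in_itv.
have cdg : {within `[0, T]%classic, continuous (fun t => `|dg t|)}.
  apply/subspace_continuousP => x xin.
  have cfu : {within `[0, T]%classic, continuous (f \o u)}.
    by apply: within_continuous_comp => // y _; apply: cf.
  exact: (cvg_norm (cvgM (within_cvg cfu xin) (within_cvg cdu xin))).
have [c c_in hc] := EVT_max (ltW T0) cdg.
pose L := `|dg c|.
have L0 : 0 <= L by apply: normr_ge0.
have lip := lipschitz_mvt hdg cg (fun t tin => hc t (ltac:(by rewrite in_itv /=))).
pose good t := [/\ derivable (phi \o du) t 1,
  (phi \o du)^`()%classic t + lam * f (u t) * du t + lam * h t (u t) = 0,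
  is_derive t (1:R) Gi (gamma t) & (forall x, h t x <= gamma t)].
pose N := [set t | 0 <= t <= T /\ ~ (0 < t < T /\ good t)].
have negN : (@lebesgue_measure R).-negligible N.
  have := negligibleU (negligibleU (negligibleU hae hGi) hgam)
    (negligibleU (negligible_pt (0:R)) (negligible_pt T)).
  apply: negligibleS => t [/andP[t0 tT] ng].
  have [->|t0'] := eqVneq t 0; first by right; left.
  have [->|tT'] := eqVneq t T; first by right; right.
  have tin : 0 < t < T.
    by rewrite lt_neqAle eq_sym t0' t0 lt_neqAle tT' tT.
  left.
  have [P1|P1] := pselect (0 < t < T -> derivable (phi \o du) t 1 /\
     (phi \o du)^`()%classic t + lam * f (u t) * du t + lam * h t (u t) = 0);
    last by left; left.
  have [P2|P2] := pselect (0 < t < T -> is_derive t (1:R) Gi (gamma t));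
    last by left; right.
  have [P3|P3] := pselect (0 <= t <= T -> forall x, h t x <= gamma t);
    last by right.
  exfalso; apply: ng; split => //.
  have [Q1 Q2] := P1 tin.
  by split => //; [exact: P2 | apply: P3; rewrite t0 tT].
pose H t := phi (du t) + lam * g t + Gi t.
have Hgood : forall s, 0 <= s <= T -> ~ N s -> exists2 d : R, 0 <= d &
    is_derive s (1:R) H d.
  move=> s sin nNs.
  have [sin' [gd1 gd2 gd3 gd4]] : 0 < s < T /\ good s.
    by apply: contrapT => ng; apply: nNs; split.
  have hphi : is_derive s (1:R) (phi \o du) ((phi \o du)^`()%classic s).
    by rewrite derive1E; apply: derivableP.
  have hH := is_deriveD (is_deriveD hphi (is_deriveZ lam (hdg s sin'))) gd3.
  exists ((phi \o du)^`()%classic s + lam *: dg s + gamma s).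
    have := gd4 (u s); have := g0 s sin; rewrite /dg /= => g0s hs.
    have : lam * h s (u s) <= gamma s by nra.
    change (lam *: (f (u s) * du s)) with (lam * (f (u s) * du s)); lra.
  by apply: is_derive_ext hH => y.
have Hmono : forall a b, 0 <= a -> a <= b -> b <= T -> H a <= H b.
  move=> a b a0' ab bT.
  apply: (@mono R a b (lam * L) H (phi \o du) N ab (mulr_ge0 (ltW lam0) L0) negN).
  - move=> s /andP[as_ sb] nNs e e0.
    have [d d0 hdd] := Hgood s (ltac:(apply/andP; split; lra)) nNs.
    exact: deriv_bound hdd d0 e e0.
  - move=> x y ax xy yb.
    have := lip x y (ltac:(lra)) xy (ltac:(lra)).
    rewrite ler_norml => /andP[l1 _].
    have : lam * (- (L * (y - x))) <= lam * (g y - g x) by apply: ler_wpM2l => //; apply: ltW.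
    have := Gimono x y xy.
    have : - `|phi (du y) - phi (du x)| <= phi (du y) - phi (du x).
      by rewrite lerNl -normrN ler_norm.
    rewrite /H /=; lra.
  - move=> e e0; have [d d0 Hd] := ac_seq hac e0.
    exists d => // sq fsq; apply: Hd; exact: fam_ok'_weaken fsq.
pose Gf t := phi (du t) + lam * g t.
have GfT : Gf T = Gf 0 by rewrite /Gf /g /= duT uT.
have Gb : forall s t, 0 <= s <= T -> 0 <= t <= T -> Gf t - Gf s <= Gi T.
  move=> s t /andP[s0 sT] /andP[t0 tT].
  have := Gi0 0; have := Gi0 t; have := Gi0 s.
  have [st|ts] := leP s t.
    have := Hmono 0 s (lexx _) s0 sT; have := Hmono t T t0 tT (lexx _).
    have := Gimono s t st; have := Gimono t T tT.
    move: GfT; rewrite /H /Gf; lra.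
  have := Hmono t s t0 (ltW ts) sT; have := Gimono s T sT.
  rewrite /H /Gf; lra.
have rq := C1_rquot C1; have lq := C1_lquot C1.
have phile : forall x y, x <= y -> phi x <= phi y.
  move=> x y; rewrite le_eqVlt => /orP[/eqP ->|xy]; first exact: lexx.
  exact/ltW/phiI.
move=> t tin; apply/andP; split.
  have [dt|dt] := leP 0 (du t).
    have := Gi0 T; have := phile _ _ dt; rewrite phi0; lra.
  have [s [sin us ds]] := cross_neg T0 cu rq lq uT duT tin dt.
  have := Gb t s tin sin; have := phile _ _ ds; rewrite phi0 /Gf /g /= us; lra.
have [dt|dt] := leP (du t) 0.
  have := Gi0 T; have := phile _ _ dt; rewrite phi0; lra.
have [s [sin us ds]] := cross_pos T0 cu rq lq uT duT tin dt.
have := Gb s t sin tin; have := phile _ _ ds; rewrite phi0 /Gf /g /= us; lra.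
Qed.


Unset Implicit Arguments.

Theorem lemma2p5 (R : realType) (T : R) (phi gamma : R -> R) :
  0 < T ->
  incr_homeo_fix0 phi ->
  (forall t : R, 0 <= t <= T -> 0 <= gamma t) ->
  (@lebesgue_measure R).-integrable `[0%R, T]%classic (EFin \o gamma) ->
  (exists K0 : R,
     forall (f : R -> R) (h : R -> R -> R),
       continuous f -> caratheodory T h ->
       {ae @lebesgue_measure R, forall t : R, 0 <= t <= T ->
          forall x : R, h t x <= gamma t} ->
       forall (lam : R) (u du : R -> R),
         0 < lam <= 1 -> periodic_solution T phi f h lam u du ->
         (forall s t : R, 0 <= s <= T -> 0 <= t <= T -> u t - u s <= K0) /\
         Rintegral (@lebesgue_measure R) `[0%R, T]%classic
           (fun t => `|du t|) <= K0) /\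
  (forall (f : R -> R) (h : R -> R -> R),
     continuous f -> caratheodory T h ->
     {ae @lebesgue_measure R, forall t : R, 0 <= t <= T ->
        forall x : R, h t x <= gamma t} ->
     forall l1 l2 : R, l1 < l2 ->
     exists2 K1 : R, 0 < K1 &
       forall (lam : R) (u du : R -> R),
         0 < lam <= 1 -> periodic_solution T phi f h lam u du ->
         (forall t : R, 0 <= t <= T -> l1 <= u t <= l2) ->
         forall t : R, 0 <= t <= T -> `|du t| <= K1).
Proof.
move=> T0 [phiI [cphi [[psi [phipsi [psiphi cpsi]]] phi0]]] g0 gint.
have mD : measurable (`[0, T]%classic : set R) by exact: measurable_itv.
pose g' := gamma \_ `[0, T]%classic.
have g'0 : forall x, 0 <= g' x.
  move=> x; rewrite /g' patchE; case: ifPn => // /set_mem /=; rewrite in_itv /=.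
  exact: g0.
have intT : (@lebesgue_measure R).-integrable setT (EFin \o g').
  by rewrite /g' -restrict_EFin -integrable_mkcond.
have intS : forall A, measurable A -> (@lebesgue_measure R).-integrable A (EFin \o g').
  by move=> A mA; apply: integrableS intT.
pose Gi x := (\int[@lebesgue_measure R]_(t in [set` Interval (BLeft 0) (BRight x)]) (g' t))%R.
have Gi0 : forall x, 0 <= Gi x.
  by move=> x; apply: Rintegral_ge0 => y _; exact: g'0.
have Gimono : forall x y, x <= y -> Gi x <= Gi y.
  move=> x y xy; rewrite /Gi /Rintegral; apply: fine_le.
  - by have := @integrable_fin_num _ _ _ (@lebesgue_measure R) _ (measurable_itv `[0, x]) _ (intS _ (measurable_itv `[0, x])); apply.
  - by have := @integrable_fin_num _ _ _ (@lebesgue_measure R) _ (measurable_itv `[0, y]) _ (intS _ (measurable_itv `[0, y])); apply.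
  apply: (@ge0_subset_integral _ _ _ (@lebesgue_measure R) `[0, x]%classic `[0, y]%classic (measurable_itv _) (measurable_itv _)).
  - by case/integrableP : (intS _ (measurable_itv `[0, y])).
  - by move=> z _; rewrite lee_fin.
  - by move=> z /=; rewrite !in_itv /= => /andP[? ?]; apply/andP; split => //; lra.
have hGi : {ae @lebesgue_measure R, forall t, 0 < t < T -> is_derive t (1:R) Gi (gamma t)}.
  have hloc : locally_integrable [set: R] g' by apply: integrable_locally.
  have := @FTC1 R g' (BLeft 0) (fun y => intS _ (measurable_itv _)) hloc.
  apply: negligibleS => t /= nP; apply: contra_not nP => Q tin.
  have hb : (0%:E < t%:E)%E by rewrite lte_fin; move: tin => /andP[? ?].
  have [der val] := Q hb.
  have <- : g' t = gamma t.
    rewrite /g' patchE mem_set //= in_itv /=; move: tin => /andP[? ?].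
    by apply/andP; split; lra.
  by rewrite -val derive1E; apply: derivableP.
pose K := `|psi (Gi T)| + `|psi (- Gi T)|.
have K0 : 0 <= K by apply: addr_ge0; apply: normr_ge0.
have main : forall f h, continuous f ->
    {ae @lebesgue_measure R, forall t : R, 0 <= t <= T ->
        forall x : R, h t x <= gamma t} ->
    forall lam u du, 0 < lam <= 1 -> periodic_solution T phi f h lam u du ->
    forall t, 0 <= t <= T -> `|du t| <= K.
  move=> f h cf hgam lam u du lamb sol t tin.
  have /andP[c1 c2] := core T0 phiI phi0 cf lamb Gi0 Gimono hGi hgam g0 sol tin.
  have up : du t <= psi (Gi T).
    rewrite leNgt; apply/negP => /phiI; rewrite psiphi; lra.
  have lo : psi (- Gi T) <= du t.
    rewrite leNgt; apply/negP => /phiI; rewrite psiphi; lra.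
  have n1 := ler_norm (psi (Gi T)); have n2 := ler_norm (psi (- Gi T)).
  have n3 : - `|psi (- Gi T)| <= psi (- Gi T).
    by rewrite lerNl -normrN ler_norm.
  have n4 := normr_ge0 (psi (Gi T)); have n5 := normr_ge0 (psi (- Gi T)).
  rewrite ler_norml; apply/andP; split; rewrite /K; lra.
split; last first.
  move=> f h cf _ hgam l1 l2 _; exists (K + 1); first lra.
  move=> lam u du lamb sol _ t tin.
  have := main f h cf hgam lam u du lamb sol t tin; lra.
exists (K * T) => f h cf _ hgam lam u du lamb sol.
have hK := main f h cf hgam lam u du lamb sol.
have [[cu [cdu [hd _]]] _] := sol.
have lip := lipschitz_mvt hd cu hK.
split.
  move=> s t /andP[s0 sT] /andP[t0 tT].
  have [st|ts] := leP s t.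
    have := lip s t s0 st tT; rewrite ler_norml => /andP[_ l2].
    have : K * (t - s) <= K * T by apply: ler_wpM2l => //; lra.
    lra.
  have := lip t s t0 (ltW ts) sT; rewrite ler_norml => /andP[l1 _].
  have : K * (s - t) <= K * T by apply: ler_wpM2l => //; lra.
  lra.
have cdun : {within `[0, T]%classic, continuous (fun t => `|du t|)}.
  apply/subspace_continuousP => x xin.
  exact: (cvg_norm (within_cvg cdu xin)).
have hc : Rintegral (@lebesgue_measure R) `[0%R, T]%classic (fun _ => K) = K * T.
  rewrite Rintegral_cst; last exact: measurable_itv.
  congr (K * _).
  have hm := lebesgue_measure_itv `[0, T]; rewrite /= lte_fin T0 /= in hm.
  rewrite oppr0 adde0 in hm; exact: (f_equal fine hm).
rewrite -hc; apply: (@le_Rintegral _ _ _ (@lebesgue_measure R) _ (fun t => `|du t|) (fun _ => K) (measurable_itv _)).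
- by apply: continuous_compact_integrable; [exact: segment_compact|].
- apply: continuous_compact_integrable; first exact: segment_compact.
  exact: continuous_subspaceT (@cst_continuous _ _ K).
- by move=> t; rewrite /= in_itv /= => tin; apply: hK.
Qed.
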